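(* Let $n\ge2\times10^3$, let $m=(n-1)/2$ if $n$ is odd and $m=n/2-1$ if $n$ is even, with $0.247m,0.339m,0.414m$ integers, and let $T=\{f_1,\dots,f_k\}\subset[0,1)$ have wrap-around minimum separation at least $2.52/(n-1)$. Then there is a fixed numerical constant $C_{\bar v}$ (independent of $n$, $k$, $T$) such that $\|\bar v_\ell(f)\|_2\le C_{\bar v}$ for all $f\in[0,1]$ and all $\ell\in\{0,1,2,3\}$.
   Context: $\bar K=\mathcal{D}_{0.247m}\mathcal{D}_{0.339m}\mathcal{D}_{0.414m}$ with $\mathcal{D}_{\tilde m}(f)=\frac{1}{2\tilde m+1}\sum_{l=-\tilde m}^{\tilde m}e^{i2\pi lf}$; $\kappa=|\bar K''(0)|^{-1/2}$; $\bar K^{(\ell)}$ is the $\ell$-th derivative. $\bar v_\ell(f)=\kappa^\ell\big(\bar K^{(\ell)}(f-f_1),\dots,\bar K^{(\ell)}(f-f_k),\ \kappa\bar K^{(\ell+1)}(f-f_1),\dots,\kappa\bar K^{(\ell+1)}(f-f_k)\big)^T\in\mathbb{C}^{2k}$. *)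

(* Defs.v *)
From Stdlib Require Import Reals Lra Lia List.
Open Scope R_scope.

Definition cplx := (R * R)%type.
Definition cmul (z w : cplx) : cplx :=
  (fst z * fst w - snd z * snd w, fst z * snd w + snd z * fst w).
Definition cscale (a : R) (z : cplx) : cplx := (a * fst z, a * snd z).
Definition cabs2 (z : cplx) : R := fst z ^ 2 + snd z ^ 2.
Definition cabs (z : cplx) : R := sqrt (cabs2 z).

(* Dirichlet kernel D_mt(f) = 1/(2mt+1) sum_{l=-mt}^{mt} e^{i 2 pi l f},
   written via Euler's formula e^{ix} = cos x + i sin x;
   the sum over l = -mt..mt is reindexed as i = 0..2mt with l = i - mt. *)
Definition Dir (mt : nat) (f : R) : cplx :=
  ( / (2 * INR mt + 1) *
      sum_f_R0 (fun i => cos (2 * PI * (INR i - INR mt) * f)) (2 * mt),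
    / (2 * INR mt + 1) *
      sum_f_R0 (fun i => sin (2 * PI * (INR i - INR mt) * f)) (2 * mt)).

Definition Kbar (m1 m2 m3 : nat) (f : R) : cplx :=
  cmul (Dir m1 f) (cmul (Dir m2 f) (Dir m3 f)).

Definition IsDerivSeq (K : R -> cplx) (Kd : nat -> R -> cplx) : Prop :=
  (forall f, Kd 0%nat f = K f) /\
  (forall (j : nat) (f : R),
     derivable_pt_lim (fun x => fst (Kd j x)) f (fst (Kd (S j) f)) /\
     derivable_pt_lim (fun x => snd (Kd j x)) f (snd (Kd (S j) f))).

Definition mOf (n : nat) : nat :=
  if Nat.odd n then ((n - 1) / 2)%nat else (n / 2 - 1)%nat.

Definition wdist (x y : R) : R := Rmin (Rabs (x - y)) (1 - Rabs (x - y)).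

Definition kappa (Kd : nat -> R -> cplx) : R := / sqrt (cabs (Kd 2%nat 0)).

Definition vbar1 (Kd : nat -> R -> cplx) (l : nat) (T : list R) (f : R) : list cplx :=
  map (fun fj => cscale (kappa Kd ^ l) (Kd l (f - fj))) T.
Definition vbar2 (Kd : nat -> R -> cplx) (l : nat) (T : list R) (f : R) : list cplx :=
  map (fun fj => cscale (kappa Kd ^ l * kappa Kd) (Kd (S l) (f - fj))) T.
Definition vbar (Kd : nat -> R -> cplx) (l : nat) (T : list R) (f : R) : list cplx :=
  vbar1 Kd l T f ++ vbar2 Kd l T f.

Definition cnorm2 (v : list cplx) : R :=
  sqrt (fold_right (fun z acc => cabs2 z + acc) 0 v).

(* Main.v *)
Require Import Defs.
From Stdlib Require Import Reals Lra Lia List Permutation FunctionalExtensionality.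
From Coquelicot Require Import Coquelicot.
Open Scope R_scope.

Lemma dpl_eq f x l l' : derivable_pt_lim f x l -> l = l' -> derivable_pt_lim f x l'.
Proof. intros H ->; exact H. Qed.

Lemma dplus f g x a b : derivable_pt_lim f x a -> derivable_pt_lim g x b ->
  derivable_pt_lim (fun y => f y + g y) x (a + b).
Proof. intros; apply derivable_pt_lim_plus; auto. Qed.
Lemma dminus f g x a b : derivable_pt_lim f x a -> derivable_pt_lim g x b ->
  derivable_pt_lim (fun y => f y - g y) x (a - b).
Proof. intros; apply derivable_pt_lim_minus; auto. Qed.
Lemma dmult f g x a b : derivable_pt_lim f x a -> derivable_pt_lim g x b ->
  derivable_pt_lim (fun y => f y * g y) x (a * g x + f x * b).
Proof. intros; apply (derivable_pt_lim_mult f g); auto. Qed.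
Lemma dscal c f x a : derivable_pt_lim f x a ->
  derivable_pt_lim (fun y => c * f y) x (c * a).
Proof. intros; apply (derivable_pt_lim_scal f c); auto. Qed.
Lemma dconst c x : derivable_pt_lim (fun _ => c) x 0.
Proof. apply (derivable_pt_lim_const c). Qed.

Lemma dsum (g : nat -> R -> R) (dg : nat -> R) n x :
  (forall i, (i <= n)%nat -> derivable_pt_lim (g i) x (dg i)) ->
  derivable_pt_lim (fun y => sum_f_R0 (fun i => g i y) n) x (sum_f_R0 dg n).
Proof.
  induction n; intros H; simpl.
  - apply H; lia.
  - apply dplus. apply IHn; intros; apply H; lia. apply H; lia.
Qed.

Lemma dcos c w p x : derivable_pt_lim (fun y => c * cos (w * y + p)) x
   (c * w * cos (w * x + p + PI/2)).
Proof.
  apply is_derive_Reals. auto_derive; auto.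
  rewrite cos_plus, cos_PI2, sin_PI2. ring.
Qed.
Lemma dsin c w p x : derivable_pt_lim (fun y => c * sin (w * y + p)) x
   (c * w * sin (w * x + p + PI/2)).
Proof.
  apply is_derive_Reals. auto_derive; auto.
  rewrite sin_plus, cos_PI2, sin_PI2. ring.
Qed.
Definition wv (mt i : nat) : R := 2 * PI * (INR i - INR mt).
Definition DD (mt a : nat) (x : R) : cplx :=
 ( / (2 * INR mt + 1) * sum_f_R0 (fun i => wv mt i ^ a * cos (wv mt i * x + INR a * (PI/2))) (2*mt),
   / (2 * INR mt + 1) * sum_f_R0 (fun i => wv mt i ^ a * sin (wv mt i * x + INR a * (PI/2))) (2*mt)).

Lemma DD_0 mt x : DD mt 0 x = Dir mt x.
Proof.
  unfold DD, Dir, wv. f_equal; f_equal; apply sum_eq; intros i _; simpl;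
  rewrite Rmult_0_l, Rplus_0_r, Rmult_1_l; reflexivity.
Qed.

Lemma DD_deriv mt : IsDerivSeq (Dir mt) (DD mt).
Proof.
  split. intro; apply DD_0.
  intros j f. split; cbn [fst snd DD]; apply dscal; apply dsum; intros i _.
  - eapply dpl_eq. apply dcos. rewrite S_INR.
    replace (wv mt i * f + (INR j + 1) * (PI / 2)) with (wv mt i * f + INR j * (PI / 2) + PI / 2) by ring.
    simpl; ring.
  - eapply dpl_eq. apply dsin. rewrite S_INR.
    replace (wv mt i * f + (INR j + 1) * (PI / 2)) with (wv mt i * f + INR j * (PI / 2) + PI / 2) by ring.
    simpl; ring.
Qed.
Definition cadd (z w : cplx) : cplx := (fst z + fst w, snd z + snd w).
Definition stepL (pq : nat * nat) : list (nat * nat) :=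
  (S (fst pq), snd pq) :: (fst pq, S (snd pq)) :: nil.
Fixpoint Lfam (j : nat) : list (nat * nat) :=
  match j with O => (O, O) :: nil | S j => flat_map stepL (Lfam j) end.
Definition PS (F G : nat -> R -> cplx) (L : list (nat * nat)) (x : R) : cplx :=
  fold_right (fun pq acc => cadd (cmul (F (fst pq) x) (G (snd pq) x)) acc) (0, 0) L.
Definition PD F G j x := PS F G (Lfam j) x.

Lemma PS_deriv K1 K2 F G : IsDerivSeq K1 F -> IsDerivSeq K2 G ->
  forall L x,
  derivable_pt_lim (fun y => fst (PS F G L y)) x (fst (PS F G (flat_map stepL L) x)) /\
  derivable_pt_lim (fun y => snd (PS F G L y)) x (snd (PS F G (flat_map stepL L) x)).
Proof.
  intros [_ HF] [_ HG] L x. induction L as [|[p q] L IH].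
  - simpl. split; apply dconst.
  - destruct IH as [IH1 IH2].
    destruct (HF p x) as [F1 F2]. destruct (HG q x) as [G1 G2].
    split; simpl; eapply dpl_eq.
    + apply dplus; [|exact IH1]. apply dminus; apply dmult; eassumption.
    + simpl. ring.
    + apply dplus; [|exact IH2]. apply dplus; apply dmult; eassumption.
    + simpl. ring.
Qed.

Lemma PD_deriv K1 K2 F G : IsDerivSeq K1 F -> IsDerivSeq K2 G ->
  IsDerivSeq (fun x => cmul (K1 x) (K2 x)) (PD F G).
Proof.
  intros H1 H2. split.
  - intro f. unfold PD, PS; simpl. destruct H1 as [E1 _]; destruct H2 as [E2 _].
    rewrite E1, E2. unfold cadd. rewrite !Rplus_0_r. destruct (cmul (K1 f) (K2 f)); reflexivity.
  - intros j f. unfold PD. simpl. apply (PS_deriv K1 K2); auto.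
Qed.

Lemma deriv_unique K Kd Kd' : IsDerivSeq K Kd -> IsDerivSeq K Kd' ->
  forall j x, Kd j x = Kd' j x.
Proof.
  intros [A1 B1] [A2 B2] j. induction j; intro x.
  - rewrite A1, A2; reflexivity.
  - assert (E : Kd j = Kd' j) by (apply functional_extensionality; exact IHj).
    destruct (B1 j x) as [P1 P2]. destruct (B2 j x) as [Q1 Q2].
    rewrite E in P1, P2.
    rewrite (surjective_pairing (Kd (S j) x)), (surjective_pairing (Kd' (S j) x)).
    f_equal; eapply uniqueness_limite; eauto.
Qed.
Definition nrm (z : cplx) : R := Rabs (fst z) + Rabs (snd z).

Lemma nrm_ge0 z : 0 <= nrm z.
Proof. unfold nrm; pose proof (Rabs_pos (fst z)); pose proof (Rabs_pos (snd z)); lra. Qed.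

Lemma nrm_cmul z w : nrm (cmul z w) <= nrm z * nrm w.
Proof.
  unfold nrm, cmul; simpl.
  destruct z as [a b], w as [c d]; simpl.
  unfold Rminus.
  eapply Rle_trans. apply Rplus_le_compat; apply Rabs_triang.
  rewrite Rabs_Ropp, !Rabs_mult.
  pose proof (Rabs_pos a); pose proof (Rabs_pos b); pose proof (Rabs_pos c); pose proof (Rabs_pos d).
  nra.
Qed.

Lemma Lfam_sum j pq : In pq (Lfam j) -> (fst pq + snd pq = j)%nat.
Proof.
  revert pq; induction j; simpl; intros pq H.
  - destruct H as [<-|[]]; reflexivity.
  - apply in_flat_map in H. destruct H as [[p q] [H1 H2]].
    apply IHj in H1. simpl in H1. unfold stepL in H2; simpl in H2.
    destruct H2 as [<-|[<-|[]]]; simpl; lia.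
Qed.

Lemma Lfam_len j : length (Lfam j) = (2 ^ j)%nat.
Proof.
  induction j; simpl; auto.
  assert (forall L : list (nat*nat), length (flat_map stepL L) = (2 * length L)%nat).
  { induction L; simpl; auto. rewrite IHL. lia. }
  rewrite H, IHj. lia.
Qed.

Lemma PS_bound F G L x B :
  (forall pq, In pq L -> nrm (cmul (F (fst pq) x) (G (snd pq) x)) <= B) ->
  nrm (PS F G L x) <= INR (length L) * B.
Proof.
  induction L as [|pq L IH]; intro H.
  - simpl. unfold nrm; simpl. rewrite Rabs_R0. lra.
  - simpl length. rewrite S_INR.
    change (PS F G (pq::L) x) with (cadd (cmul (F (fst pq) x) (G (snd pq) x)) (PS F G L x)).
    assert (H1 := H pq (or_introl eq_refl)).
    assert (H2 : nrm (PS F G L x) <= INR (length L) * B) by (apply IH; intros; apply H; right; auto).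
    unfold nrm, cadd in *. cbn [fst snd].
    pose proof (Rabs_triang (fst (cmul (F (fst pq) x) (G (snd pq) x))) (fst (PS F G L x))).
    pose proof (Rabs_triang (snd (cmul (F (fst pq) x) (G (snd pq) x))) (snd (PS F G L x))).
    lra.
Qed.

Lemma PD_bound F G x M aF aG rF rG :
  0 <= M -> 0 <= aF -> 0 <= aG -> 0 <= rF -> 0 <= rG ->
  (forall p, (p <= 4)%nat -> nrm (F p x) <= aF * M ^ p * rF) ->
  (forall p, (p <= 4)%nat -> nrm (G p x) <= aG * M ^ p * rG) ->
  forall j, (j <= 4)%nat -> nrm (PD F G j x) <= (16 * aF * aG) * M ^ j * (rF * rG).
Proof.
  intros HM HaF HaG HrF HrG HF HG j Hj. unfold PD.
  eapply Rle_trans. apply PS_bound with (B := aF * aG * M ^ j * (rF * rG)).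
  - intros [p q] Hin. pose proof (Lfam_sum j _ Hin) as Hs; simpl in Hs; simpl.
    eapply Rle_trans. apply nrm_cmul.
    assert (A1 := HF p ltac:(lia)). assert (A2 := HG q ltac:(lia)).
    pose proof (nrm_ge0 (F p x)); pose proof (nrm_ge0 (G q x)).
    replace (aF * aG * M ^ j * (rF * rG)) with ((aF * M ^ p * rF) * (aG * M ^ q * rG)).
    apply Rmult_le_compat; auto.
    rewrite <- Hs, pow_add. ring.
  - rewrite Lfam_len.
    assert (INR (2 ^ j) <= 16).
    { replace 16 with (INR 16) by (simpl; ring). apply le_INR.
      replace 16%nat with (2^4)%nat by reflexivity. apply Nat.pow_le_mono_r; lia. }
    assert (0 <= aF * aG * M ^ j * (rF * rG)).
    { apply Rmult_le_pos; [|nra]. apply Rmult_le_pos; [nra|]. apply pow_le; auto. }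
    replace (16 * aF * aG * M ^ j * (rF * rG)) with (16 * (aF * aG * M ^ j * (rF * rG))) by ring.
    apply Rmult_le_compat_r; auto.
Qed.
Lemma powdiff a x y M : Rabs x <= M -> Rabs y <= M ->
  Rabs (x ^ a - y ^ a) * M <= INR a * M ^ a * Rabs (x - y).
Proof.
  intros Hx Hy. assert (HM : 0 <= M) by (pose proof (Rabs_pos x); lra).
  induction a.
  - simpl. rewrite Rminus_diag, Rabs_R0. lra.
  - replace (x ^ S a - y ^ S a) with (x * (x ^ a - y ^ a) + (x - y) * y ^ a) by (simpl; ring).
    rewrite S_INR.
    eapply Rle_trans. apply Rmult_le_compat_r; [exact HM| apply Rabs_triang].
    rewrite !Rabs_mult, <- RPow_abs.
    assert (Hya : Rabs y ^ a <= M ^ a) by (apply pow_incr; split; [apply Rabs_pos|auto]).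
    pose proof (Rabs_pos x). pose proof (Rabs_pos (x - y)). pose proof (Rabs_pos (x^a - y^a)).
    pose proof (pow_le _ a (Rabs_pos y)).
    simpl.
    assert (Rabs x * Rabs (x ^ a - y ^ a) * M <= M * (INR a * M ^ a * Rabs (x - y))).
    { rewrite Rmult_assoc. apply Rmult_le_compat; try nra. }
    assert (Rabs (x - y) * Rabs y ^ a * M <= Rabs (x - y) * M ^ a * M).
    { apply Rmult_le_compat_r; auto. apply Rmult_le_compat_l; auto. }
    nra.
Qed.

Lemma abel_id (c E : nat -> R) N :
  sum_f_R0 (fun i => c i * (E (S i) - E i)) N + sum_f_R0 (fun i => (c (S i) - c i) * E (S i)) N
  = c (S N) * E (S N) - c 0%nat * E 0%nat.
Proof.
  induction N; [simpl; ring|].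
  change (sum_f_R0 (fun i => c i * (E (S i) - E i)) (S N)) with
    (sum_f_R0 (fun i => c i * (E (S i) - E i)) N + c (S N) * (E (S (S N)) - E (S N))).
  change (sum_f_R0 (fun i => (c (S i) - c i) * E (S i)) (S N)) with
    (sum_f_R0 (fun i => (c (S i) - c i) * E (S i)) N + (c (S (S N)) - c (S N)) * E (S (S N))).
  lazymatch goal with |- ?A + ?t1 + (?B + ?t2) = _ =>
    replace (A + t1 + (B + t2)) with ((A + B) + t1 + t2) by ring end.
  rewrite IHN. ring.
Qed.

Lemma abel_bound (c E v : nat -> R) s N :
  (forall i, (i <= N)%nat -> 2 * s * v i = E (S i) - E i) -> (forall i, Rabs (E i) <= 1) ->
  Rabs (2 * s * sum_f_R0 (fun i => c i * v i) N) <=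
    Rabs (c 0%nat) + Rabs (c (S N)) + sum_f_R0 (fun i => Rabs (c (S i) - c i)) N.
Proof.
  intros Hv HE.
  assert (Eq : 2 * s * sum_f_R0 (fun i => c i * v i) N = sum_f_R0 (fun i => c i * (E (S i) - E i)) N).
  { rewrite scal_sum. apply sum_eq. intros i Hi. rewrite <- Hv by auto. ring. }
  rewrite Eq.
  replace (sum_f_R0 (fun i => c i * (E (S i) - E i)) N) with
    (c (S N) * E (S N) - c 0%nat * E 0%nat - sum_f_R0 (fun i => (c (S i) - c i) * E (S i)) N)
    by (pose proof (abel_id c E N); lra).
  unfold Rminus. eapply Rle_trans. apply Rabs_triang. rewrite Rabs_Ropp.
  eapply Rle_trans. apply Rplus_le_compat_r. apply Rabs_triang. rewrite Rabs_Ropp.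
  assert (Rabs (sum_f_R0 (fun i => (c (S i) + - c i) * E (S i)) N) <= sum_f_R0 (fun i => Rabs (c (S i) + - c i)) N).
  { eapply Rle_trans. apply sum_f_R0_triangle. apply sum_Rle. intros i _.
    rewrite Rabs_mult. pose proof (HE (S i)). pose proof (Rabs_pos (c (S i) + - c i)).
    pose proof (Rabs_pos (E (S i))). nra. }
  rewrite !Rabs_mult. pose proof (HE (S N)). pose proof (HE 0%nat).
  pose proof (Rabs_pos (c (S N))). pose proof (Rabs_pos (c 0%nat)).
  pose proof (Rabs_pos (E (S N))). pose proof (Rabs_pos (E 0%nat)). nra.
Qed.

Lemma wvS mt i : wv mt (S i) = wv mt i + 2 * PI.
Proof. unfold wv. rewrite S_INR. ring. Qed.

Lemma wv_bound mt i : (i <= 2 * mt + 1)%nat -> Rabs (wv mt i) <= 2 * PI * (INR mt + 1).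
Proof.
  intros Hi. unfold wv. pose proof PI_RGT_0.
  rewrite Rabs_mult, (Rabs_right (2*PI)) by lra.
  apply Rmult_le_compat_l; [lra|].
  apply le_INR in Hi. rewrite plus_INR, mult_INR in Hi. simpl in Hi.
  pose proof (pos_INR i). apply Rabs_le. lra.
Qed.

Lemma wv_bound0 mt i : (i <= 2 * mt)%nat -> Rabs (wv mt i) <= 2 * PI * INR mt.
Proof.
  intros Hi. unfold wv. pose proof PI_RGT_0.
  rewrite Rabs_mult, (Rabs_right (2*PI)) by lra.
  apply Rmult_le_compat_l; [lra|].
  apply le_INR in Hi. rewrite mult_INR in Hi. simpl in Hi.
  pose proof (pos_INR i). apply Rabs_le. lra.
Qed.
Lemma comp_bound mt a x (v E : nat -> R) :
  (a <= 4)%nat ->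
  (forall i, (i <= 2 * mt)%nat -> 2 * sin (PI * x) * v i = E (S i) - E i) ->
  (forall i, Rabs (E i) <= 1) -> (forall i, Rabs (v i) <= 1) ->
  Rabs (/ (2 * INR mt + 1) * sum_f_R0 (fun i => wv mt i ^ a * v i) (2 * mt))
    * (1 + INR mt * Rabs (sin (PI * x))) <= 6 * (2 * PI * (INR mt + 1)) ^ a.
Proof.
  intros Ha Hv HE Hv1.
  set (Mt := 2 * PI * (INR mt + 1)).
  set (S0 := sum_f_R0 (fun i => wv mt i ^ a * v i) (2 * mt)).
  pose proof PI_RGT_0 as Hpi. pose proof (pos_INR mt) as Hm.
  assert (HMt : 0 < Mt) by (unfold Mt; nra).
  assert (HMa : 0 <= Mt ^ a) by (apply pow_le; lra).
  assert (Hc : forall i, (i <= 2 * mt + 1)%nat -> Rabs (wv mt i ^ a) <= Mt ^ a).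
  { intros i Hi. rewrite <- RPow_abs. apply pow_incr. split. apply Rabs_pos. apply wv_bound; auto. }
  assert (T1 : Rabs S0 <= Mt ^ a * (2 * INR mt + 1)).
  { unfold S0. eapply Rle_trans. apply sum_f_R0_triangle.
    eapply Rle_trans. apply sum_Rle with (Bn := fun _ => Mt ^ a).
    - intros i Hi. rewrite Rabs_mult. pose proof (Hv1 i). pose proof (Rabs_pos (v i)).
      pose proof (Hc i ltac:(lia)). pose proof (Rabs_pos (wv mt i ^ a)). nra.
    - rewrite sum_cte. rewrite S_INR, mult_INR. simpl. lra. }
  assert (T2 : Rabs (2 * sin (PI * x) * S0) <= (2 + 2 * INR a) * Mt ^ a).
  { unfold S0. eapply Rle_trans. apply (abel_bound (fun i => wv mt i ^ a) E v); auto.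
    assert (D : sum_f_R0 (fun i => Rabs (wv mt (S i) ^ a - wv mt i ^ a)) (2 * mt)
                <= INR a * Mt ^ a / (INR mt + 1) * (2 * INR mt + 1)).
    { eapply Rle_trans. apply sum_Rle with (Bn := fun _ => INR a * Mt ^ a / (INR mt + 1)).
      - intros i Hi.
        assert (P := powdiff a (wv mt (S i)) (wv mt i) Mt (wv_bound mt (S i) ltac:(lia)) (wv_bound mt i ltac:(lia))).
        rewrite wvS in P. replace (wv mt i + 2 * PI - wv mt i) with (2 * PI) in P by ring.
        rewrite (Rabs_right (2 * PI)) in P by lra. rewrite wvS.
        apply Rmult_le_reg_r with Mt; auto. unfold Mt at 3. field_simplify; [|lra].
        replace (2 * INR a * Mt ^ a * PI) with (INR a * Mt ^ a * (2 * PI)) by ring; exact P.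
      - rewrite (sum_cte (INR a * Mt ^ a / (INR mt + 1))), S_INR, mult_INR. simpl. lra. }
    assert (INR a * Mt ^ a / (INR mt + 1) * (2 * INR mt + 1) <= 2 * INR a * Mt ^ a).
    { pose proof (pos_INR a). unfold Rdiv.
      replace (INR a * Mt ^ a * / (INR mt + 1) * (2 * INR mt + 1)) with
        (INR a * Mt ^ a * ((2 * INR mt + 1) / (INR mt + 1))) by (field; lra).
      assert ((2 * INR mt + 1) / (INR mt + 1) <= 2).
      { apply Rmult_le_reg_r with (INR mt + 1); [lra|]. field_simplify; lra. }
      assert (0 <= INR a * Mt ^ a) by nra. nra. }
    assert (Rabs (wv mt 0 ^ a) <= Mt ^ a) by (apply Hc; lia).
    assert (Rabs (wv mt (S (2 * mt)) ^ a) <= Mt ^ a) by (apply Hc; lia).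
    lra. }
  rewrite Rabs_mult, Rabs_inv by lra. rewrite (Rabs_right (2 * INR mt + 1)) by lra.
  rewrite !Rabs_mult in T2. rewrite (Rabs_right 2) in T2 by lra.
  assert (Ha' : INR a <= 4) by (replace 4 with (INR 4) by (simpl; ring); apply le_INR; auto).
  set (q := Rabs S0) in *. set (s := Rabs (sin (PI * x))) in *.
  assert (Hq : 0 <= q) by apply Rabs_pos. assert (Hs : 0 <= s) by apply Rabs_pos.
  assert (HN : 0 < 2 * INR mt + 1) by lra.
  assert (E1 : / (2 * INR mt + 1) * q <= Mt ^ a).
  { apply Rmult_le_reg_l with (2 * INR mt + 1); auto. field_simplify; lra. }
  assert (E2 : INR mt * / (2 * INR mt + 1) <= 1).
  { apply Rmult_le_reg_l with (2 * INR mt + 1); auto. field_simplify; lra. }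
  assert (E3 : s * q <= (1 + INR a) * Mt ^ a) by nra.
  assert (0 <= INR mt * / (2 * INR mt + 1)) by (apply Rmult_le_pos; [lra|]; apply Rlt_le, Rinv_0_lt_compat; lra).
  replace (/ (2 * INR mt + 1) * q * (1 + INR mt * s)) with
    (/ (2 * INR mt + 1) * q + (INR mt * / (2 * INR mt + 1)) * (s * q)) by ring.
  assert ((INR mt * / (2 * INR mt + 1)) * (s * q) <= 1 * ((1 + INR a) * Mt ^ a)).
  { apply Rmult_le_compat; auto. nra. }
  nra.
Qed.
Lemma DD_bound mt a x : (a <= 4)%nat ->
  nrm (DD mt a x) * (1 + INR mt * Rabs (sin (PI * x))) <= 12 * (2 * PI * (INR mt + 1)) ^ a.
Proof.
  intro Ha. unfold nrm, DD. cbn [fst snd].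
  set (ph := INR a * (PI / 2)).
  assert (A1 := comp_bound mt a x (fun i => cos (wv mt i * x + ph))
                  (fun i => sin (wv mt i * x - PI * x + ph)) Ha).
  assert (A2 := comp_bound mt a x (fun i => sin (wv mt i * x + ph))
                  (fun i => - cos (wv mt i * x - PI * x + ph)) Ha).
  cbv beta in A1, A2.
  assert (B1 : Rabs (/ (2 * INR mt + 1) * sum_f_R0 (fun i => wv mt i ^ a * cos (wv mt i * x + ph)) (2 * mt)) *
     (1 + INR mt * Rabs (sin (PI * x))) <= 6 * (2 * PI * (INR mt + 1)) ^ a).
  { apply A1.
    - intros i _. rewrite wvS.
      replace ((wv mt i + 2 * PI) * x - PI * x + ph) with ((wv mt i * x + ph) + PI * x) by ring.
      replace (wv mt i * x - PI * x + ph) with ((wv mt i * x + ph) - PI * x) by ring.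
      rewrite sin_plus, sin_minus. ring.
    - intro; apply Rabs_le; apply SIN_bound.
    - intro; apply Rabs_le; apply COS_bound. }
  assert (B2 : Rabs (/ (2 * INR mt + 1) * sum_f_R0 (fun i => wv mt i ^ a * sin (wv mt i * x + ph)) (2 * mt)) *
     (1 + INR mt * Rabs (sin (PI * x))) <= 6 * (2 * PI * (INR mt + 1)) ^ a).
  { apply A2.
    - intros i _. rewrite wvS.
      replace ((wv mt i + 2 * PI) * x - PI * x + ph) with ((wv mt i * x + ph) + PI * x) by ring.
      replace (wv mt i * x - PI * x + ph) with ((wv mt i * x + ph) - PI * x) by ring.
      rewrite cos_plus, cos_minus. ring.
    - intro; rewrite Rabs_Ropp; apply Rabs_le; apply COS_bound.
    - intro; apply Rabs_le; apply SIN_bound. }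
  lra.
Qed.
Definition rho (m : nat) (x : R) : R := / (1 + INR m * Rabs (sin (PI * x))).

Lemma rho_pos m x : 0 < rho m x.
Proof. unfold rho. apply Rinv_0_lt_compat. pose proof (pos_INR m). pose proof (Rabs_pos (sin (PI*x))). nra. Qed.
Lemma rho_le1 m x : rho m x <= 1.
Proof. unfold rho. pose proof (pos_INR m). pose proof (Rabs_pos (sin (PI*x))).
  rewrite <- Rinv_1. apply Rinv_le_contravar; nra. Qed.

Lemma DD_bound2 mt m a x : INR m <= 5 * INR mt -> INR mt <= INR m -> (a <= 4)%nat ->
  nrm (DD mt a x) <= 60 * (2 * PI * (INR m + 1)) ^ a * rho m x.
Proof.
  intros H1 H2 Ha. pose proof (DD_bound mt a x Ha) as B.
  pose proof PI_RGT_0. pose proof (pos_INR mt). pose proof (Rabs_pos (sin (PI*x))).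
  set (s := Rabs (sin (PI * x))) in *.
  assert (P : (2 * PI * (INR mt + 1)) ^ a <= (2 * PI * (INR m + 1)) ^ a).
  { apply pow_incr; split; nra. }
  assert (Q : 0 <= (2 * PI * (INR mt + 1)) ^ a) by (apply pow_le; nra).
  unfold rho. fold s.
  assert (Hd : 0 < 1 + INR mt * s) by nra.
  assert (Hd' : 0 < 1 + INR m * s) by nra.
  assert (H4 : nrm (DD mt a x) <= 12 * (2 * PI * (INR m + 1)) ^ a / (1 + INR mt * s)).
  { apply Rmult_le_reg_r with (1 + INR mt * s); auto. unfold Rdiv. rewrite Rmult_assoc, Rinv_l by lra. lra. }
  eapply Rle_trans; [exact H4|].
  unfold Rdiv. replace (60 * (2 * PI * (INR m + 1)) ^ a * / (1 + INR m * s)) with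
     (12 * (2 * PI * (INR m + 1)) ^ a * (5 / (1 + INR m * s))) by (field; lra).
  apply Rmult_le_compat_l. pose proof (pow_le (2 * PI * (INR m + 1)) a). nra.
  apply Rmult_le_reg_r with ((1 + INR mt * s) * (1 + INR m * s)). nra.
  field_simplify; try lra. nra.
Qed.

Definition KP (m1 m2 m3 : nat) := PD (DD m1) (PD (DD m2) (DD m3)).

Lemma KP_deriv m1 m2 m3 : IsDerivSeq (Kbar m1 m2 m3) (KP m1 m2 m3).
Proof.
  unfold KP, Kbar. apply (PD_deriv (Dir m1) (fun x => cmul (Dir m2 x) (Dir m3 x))).
  apply DD_deriv. apply (PD_deriv (Dir m2) (Dir m3)); apply DD_deriv.
Qed.

Lemma KP_bound m m1 m2 m3 j x :
  INR m <= 5 * INR m1 -> INR m1 <= INR m ->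
  INR m <= 5 * INR m2 -> INR m2 <= INR m ->
  INR m <= 5 * INR m3 -> INR m3 <= INR m -> (j <= 4)%nat ->
  nrm (KP m1 m2 m3 j x) <= (16 * 60 * (16 * 60 * 60)) * (2 * PI * (INR m + 1)) ^ j * (rho m x * (rho m x * rho m x)).
Proof.
  intros. pose proof PI_RGT_0. pose proof (pos_INR m). pose proof (rho_pos m x).
  unfold KP. apply PD_bound; auto; try lra; try nra.
  - intros; apply DD_bound2; auto.
  - intros p Hp. replace (16 * 60 * 60) with (16 * 60 * 60) by ring.
    apply PD_bound; auto; try lra; try nra; intros; apply DD_bound2; auto.
Qed.
Lemma sum_lin N c : sum_f_R0 (fun i => INR i - c) N = INR N * (INR N + 1) / 2 - (INR N + 1) * c.
Proof. induction N. simpl; field. rewrite tech5, IHN, S_INR. field. Qed.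
Lemma sum_sq N c : sum_f_R0 (fun i => (INR i - c) ^ 2) N =
  INR N * (INR N + 1) * (2 * INR N + 1) / 6 - c * INR N * (INR N + 1) + (INR N + 1) * c ^ 2.
Proof. induction N. simpl; field. rewrite tech5, IHN, S_INR. field. Qed.

Definition sq (mt : nat) : R := 4 * PI ^ 2 * INR mt * (INR mt + 1) / 3.

Lemma DD00 mt : DD mt 0 0 = (1, 0).
Proof.
  unfold DD. f_equal.
  - rewrite (sum_eq _ (fun _ => 1)). rewrite sum_cte, S_INR, mult_INR. simpl. field.
    pose proof (pos_INR mt); lra.
    intros i _. simpl. rewrite Rmult_0_r, Rmult_0_l, Rplus_0_r, cos_0. ring.
  - rewrite (sum_eq _ (fun _ => 0)). rewrite sum_cte. ring.
    intros i _. simpl. rewrite Rmult_0_r, Rmult_0_l, Rplus_0_r, sin_0. ring.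
Qed.

Lemma DD10 mt : DD mt 1 0 = (0, 0).
Proof.
  unfold DD. f_equal.
  - rewrite (sum_eq _ (fun _ => 0)). rewrite sum_cte. ring.
    intros i _. simpl. rewrite Rmult_0_r, Rmult_1_l, Rplus_0_l, cos_PI2. ring.
  - rewrite (sum_eq _ (fun i => (INR i - INR mt) * (2 * PI))).
    rewrite <- scal_sum, sum_lin, mult_INR. simpl. field. pose proof (pos_INR mt); lra.
    intros i _. simpl. rewrite Rmult_0_r, Rmult_1_l, Rplus_0_l, sin_PI2. unfold wv. ring.
Qed.

Lemma DD20 mt : DD mt 2 0 = (- sq mt, 0).
Proof.
  unfold DD. f_equal.
  - rewrite (sum_eq _ (fun i => (INR i - INR mt) ^ 2 * (- (4 * PI ^ 2)))).
    rewrite <- scal_sum, sum_sq, mult_INR. unfold sq. simpl. field. pose proof (pos_INR mt); lra.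
    intros i _. replace (wv mt i * 0 + INR 2 * (PI / 2)) with PI by (simpl; field).
    rewrite cos_PI. unfold wv. ring.
  - rewrite (sum_eq _ (fun _ => 0)). rewrite sum_cte. ring.
    intros i _. replace (wv mt i * 0 + INR 2 * (PI / 2)) with PI by (simpl; field).
    rewrite sin_PI. ring.
Qed.

Lemma KP20 m1 m2 m3 : KP m1 m2 m3 2 0 = (- (sq m1 + (sq m2 + sq m3)), 0).
Proof.
  unfold KP, PD, PS. cbn [Lfam flat_map stepL app fold_right fst snd].
  rewrite !DD00, !DD10, !DD20. unfold cmul, cadd. cbn [fst snd]. f_equal; ring.
Qed.
Lemma sq_ge0 mt : 0 <= sq mt.
Proof. unfold sq. pose proof (pos_INR mt). pose proof PI_RGT_0.
  apply Rmult_le_pos; [|lra]. apply Rmult_le_pos; [|lra]. apply Rmult_le_pos; [|lra]. nra. Qed.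

Lemma kappa_bound m m1 m2 m3 Kd : IsDerivSeq (Kbar m1 m2 m3) Kd ->
  999 <= INR m -> INR m1 = 247 / 1000 * INR m ->
  0 <= kappa Kd /\ kappa Kd * (2 * PI * (INR m + 1)) <= 9.
Proof.
  intros HK Hm H1.
  unfold kappa. rewrite (deriv_unique _ _ _ HK (KP_deriv m1 m2 m3)), KP20.
  set (S0 := sq m1 + (sq m2 + sq m3)).
  pose proof (sq_ge0 m1). pose proof (sq_ge0 m2). pose proof (sq_ge0 m3).
  assert (HS : sq m1 <= S0) by (unfold S0; lra).
  assert (Hsq1 : 0 < sq m1).
  { unfold sq. rewrite H1. pose proof PI_RGT_0. 
    apply Rmult_lt_0_compat; [|lra]. apply Rmult_lt_0_compat; [|lra]. apply Rmult_lt_0_compat; [|lra]. nra. }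
  assert (Hc : cabs (- S0, 0) = S0).
  { unfold cabs, cabs2. cbn [fst snd]. replace ((- S0) ^ 2 + 0 ^ 2) with (S0 * S0) by ring.
    apply sqrt_square. lra. }
  rewrite Hc.
  assert (HsS : 0 < sqrt S0) by (apply sqrt_lt_R0; lra).
  split. left; apply Rinv_0_lt_compat; auto.
  set (M := 2 * PI * (INR m + 1)).
  assert (HM : 0 <= M) by (unfold M; pose proof PI_RGT_0; nra).
  assert (HM2 : M * M <= 81 * S0).
  { eapply Rle_trans with (81 * sq m1); [|lra].
    unfold M, sq. rewrite H1. pose proof PI_RGT_0.
    assert (PI * PI > 0) by nra.
    replace (81 * (4 * PI ^ 2 * (247 / 1000 * INR m) * (247 / 1000 * INR m + 1) / 3))
      with ((4 * (PI * PI)) * (27 * (247 / 1000 * INR m) * (247 / 1000 * INR m + 1))) by (simpl; field).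
    replace (2 * PI * (INR m + 1) * (2 * PI * (INR m + 1))) with ((4 * (PI * PI)) * ((INR m + 1) * (INR m + 1))) by ring.
    apply Rmult_le_compat_l. lra. nra. }
  assert (M <= 9 * sqrt S0).
  { rewrite <- (sqrt_square M) by auto. replace 9 with (sqrt (9 * 9)) by (apply sqrt_square; lra).
    rewrite <- sqrt_mult by lra. apply sqrt_le_1_alt. lra. }
  apply Rmult_le_reg_l with (sqrt S0); auto.
  rewrite <- Rmult_assoc, Rinv_r by lra. lra.
Qed.
Definition sumL (g : R -> R) (L : list R) : R := fold_right (fun x acc => g x + acc) 0 L.
Fixpoint sumN (g : nat -> R) (N : nat) : R :=
  match N with O => 0 | S N => sumN g N + g N end.
Definition Sep (D : R) (L : list R) : Prop :=
  NoDup L /\ forall a b, In a L -> In b L -> a <> b -> D <= Rabs (a - b).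

Lemma sumL_perm g L L' : Permutation L L' -> sumL g L = sumL g L'.
Proof. induction 1; simpl; try lra. Qed.

Lemma sumL_ext g g' L : (forall x, In x L -> g x = g' x) -> sumL g L = sumL g' L.
Proof. induction L; simpl; intros H; auto. rewrite H, IHL; auto. Qed.

Lemma sumL_le g g' L : (forall x, In x L -> g x <= g' x) -> sumL g L <= sumL g' L.
Proof. induction L; simpl; intros H; [lra|]. pose proof (H a (or_introl eq_refl)).
  assert (sumL g L <= sumL g' L) by (apply IHL; auto). lra. Qed.

Lemma sumL_map g f L : sumL g (map f L) = sumL (fun x => g (f x)) L.
Proof. induction L; simpl; auto. rewrite IHL; auto. Qed.

Lemma sumL_filter g p L : sumL g L = sumL g (filter p L) + sumL g (filter (fun x => negb (p x)) L).
Proof. induction L; simpl; [lra|]. destruct (p a); simpl; rewrite IHL; lra. Qed.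

Lemma sumN_ext g g' N : (forall k, g k = g' k) -> sumN g N = sumN g' N.
Proof. intros H; induction N; simpl; auto. rewrite IHN, H; auto. Qed.

Lemma sumN_le g g' N : (forall k, g k <= g' k) -> sumN g N <= sumN g' N.
Proof. intros H; induction N; simpl; [lra|]. pose proof (H N). lra. Qed.

Lemma sumN_shift g N : sumN g (S N) = g O + sumN (fun k => g (S k)) N.
Proof. induction N; simpl in *; [lra|]. rewrite IHN. lra. Qed.

Lemma min_ex (L : list R) : L <> nil -> exists x0, In x0 L /\ forall y, In y L -> x0 <= y.
Proof.
  induction L as [|a l IH]; intros H; [congruence|].
  destruct l as [|b l].
  - exists a. split; [left; auto|]. intros y [<-|[]]; lra.
  - destruct IH as [x0 [Hx Hm]]; [congruence|].
    destruct (Rle_dec a x0).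
    + exists a. split; [left; auto|]. intros y [<-|Hy]; [lra|]. pose proof (Hm y Hy). lra.
    + exists x0. split; [right; auto|]. intros y [<-|Hy]; [lra|]. auto.
Qed.

Lemma pack (h : R -> R) D : 0 < D -> (forall u v, 0 <= u <= v -> h v <= h u) ->
  forall N L s, length L = N -> 0 <= s -> Sep D L -> (forall x, In x L -> s <= x) ->
  sumL h L <= sumN (fun k => h (s + INR k * D)) N.
Proof.
  intros HD Hh N. induction N; intros L s Hl Hs [Hnd Hsep] Hge.
  - destruct L; [simpl; lra|discriminate].
  - assert (Hne : L <> nil) by (intro; subst; discriminate).
    destruct (min_ex L Hne) as [x0 [Hx0 Hmin]].
    destruct (in_split x0 L Hx0) as [l1 [l2 E]].
    assert (P : Permutation L (x0 :: l1 ++ l2)) by (rewrite E; apply Permutation_sym, Permutation_middle).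
    rewrite (sumL_perm h _ _ P). change (sumL h (x0 :: l1 ++ l2)) with (h x0 + sumL h (l1 ++ l2)).
    assert (HL' : length (l1 ++ l2) = N).
    { apply Permutation_length in P. simpl in P. lia. }
    assert (ND : NoDup (x0 :: l1 ++ l2)) by (eapply Permutation_NoDup; eauto).
    apply NoDup_cons_iff in ND; destruct ND as [Hnin ND'].
    assert (Hin : forall y, In y (l1 ++ l2) -> In y L).
    { intros y Hy. eapply Permutation_in; [apply Permutation_sym; exact P| right; exact Hy]. }
    assert (IH := IHN (l1 ++ l2) (s + D) HL' ltac:(lra)).
    assert (B : sumL h (l1 ++ l2) <= sumN (fun k => h (s + D + INR k * D)) N).
    { apply IH.
      - split; [exact ND'|]. intros a b Ha Hb Hab. apply Hsep; auto.
      - intros y Hy. assert (y <> x0) by (intro; subst; contradiction).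
        pose proof (Hmin y (Hin y Hy)). pose proof (Hge x0 Hx0).
        pose proof (Hsep y x0 (Hin y Hy) Hx0 H). unfold Rabs in H2. destruct (Rcase_abs (y - x0)); lra. }
    rewrite sumN_shift.
    replace (sumN (fun k => h (s + INR (S k) * D)) N) with (sumN (fun k => h (s + D + INR k * D)) N).
    + simpl INR at 1. replace (s + 0 * D) with s by ring.
      assert (h x0 <= h s) by (apply Hh; split; auto). lra.
    + apply sumN_ext. intro k. rewrite S_INR. f_equal. ring.
Qed.

Lemma sumN_inv2 N : sumN (fun k => / (1 + INR k) ^ 2) N <= 2.
Proof.
  assert (forall N, sumN (fun k => / (1 + INR k) ^ 2) (S N) + / (INR N + 1) <= 2).
  { induction N0.
    - simpl. replace ((1+0)*((1+0)*1)) with 1 by ring. replace (0+1) with 1 by ring. rewrite Rinv_1; lra.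
    - change (sumN (fun k => / (1 + INR k) ^ 2) (S (S N0))) with
        (sumN (fun k => / (1 + INR k) ^ 2) (S N0) + / (1 + INR (S N0)) ^ 2).
      rewrite S_INR. pose proof (pos_INR N0).
      assert (/ (1 + (INR N0 + 1)) ^ 2 + / (INR N0 + 1 + 1) <= / (INR N0 + 1)).
      { set (b := INR N0 + 1). assert (1 <= b) by (unfold b; lra).
        replace (1 + b) with (b + 1) by ring.
        assert (E : / b - (/ (b + 1) ^ 2 + / (b + 1)) = / (b * (b + 1) ^ 2)) by (field; lra).
        assert (0 < / (b * (b + 1) ^ 2)) by (apply Rinv_0_lt_compat; apply Rmult_lt_0_compat; [lra|apply pow_lt; lra]).
        lra. }
      lra. }
  destruct N. simpl; lra. pose proof (H N). pose proof (pos_INR N).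
  assert (0 < / (INR N + 1)) by (apply Rinv_0_lt_compat; lra). lra.
Qed.

Lemma sep_sub D L L' : Sep D L -> NoDup L' -> (forall x, In x L' -> In x L) -> Sep D L'.
Proof. intros [_ H] Hn Hi. split; auto. Qed.

Lemma sum_bound (m D : R) U : 0 < m -> 0 < D -> 1 <= m * D -> Sep D U ->
  sumL (fun u => / (1 + m * Rabs u) ^ 2) U <= 4.
Proof.
  intros Hm HD HmD HS.
  set (h := fun u => / (1 + m * u) ^ 2).
  assert (Hh : forall u v, 0 <= u <= v -> h v <= h u).
  { intros u v [H1 H2]. unfold h. apply Rinv_le_contravar. apply pow_lt; nra. apply pow_incr; nra. }
  assert (Hk : forall N, sumN (fun k => h (0 + INR k * D)) N <= 2).
  { intro N. eapply Rle_trans; [|apply (sumN_inv2 N)]. apply sumN_le. intro k. unfold h.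
    pose proof (pos_INR k). apply Rinv_le_contravar. apply pow_lt; lra. apply pow_incr; nra. }
  set (p := fun u => if Rle_dec 0 u then true else false).
  rewrite (sumL_filter _ p).
  destruct HS as [Hnd Hsep].
  assert (A : sumL (fun u => / (1 + m * Rabs u) ^ 2) (filter p U) <= 2).
  { rewrite (sumL_ext _ h).
    - eapply Rle_trans; [|apply (Hk (length (filter p U)))].
      apply (pack h D HD Hh _ _ 0 eq_refl (Rle_refl 0)).
      + apply (sep_sub D U). split; auto. apply NoDup_filter; auto. intros x Hx; apply filter_In in Hx; tauto.
      + intros x Hx. apply filter_In in Hx. destruct Hx as [_ Hx]. unfold p in Hx. destruct (Rle_dec 0 x); [lra|discriminate].
    - intros x Hx. apply filter_In in Hx. destruct Hx as [_ Hx]. unfold p in Hx. unfold h.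
      destruct (Rle_dec 0 x); [|discriminate]. rewrite Rabs_right; lra. }
  assert (B : sumL (fun u => / (1 + m * Rabs u) ^ 2) (filter (fun x => negb (p x)) U) <= 2).
  { set (Ln := filter (fun x => negb (p x)) U).
    assert (Hneg : forall x, In x Ln -> x < 0).
    { intros x Hx. apply filter_In in Hx. destruct Hx as [_ Hx]. unfold p in Hx.
      destruct (Rle_dec 0 x); [discriminate|lra]. }
    rewrite (sumL_ext _ (fun x => h (Ropp x))).
    2:{ intros x Hx. unfold h. rewrite Rabs_left; auto. }
    rewrite <- (sumL_map h Ropp).
    eapply Rle_trans; [|apply (Hk (length (map Ropp Ln)))].
    apply (pack h D HD Hh _ _ 0 eq_refl (Rle_refl 0)).
    - split.
      + apply FinFun.Injective_map_NoDup. intros a b E; lra. apply NoDup_filter; auto.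
      + intros a b Ha Hb Hab. apply in_map_iff in Ha, Hb.
        destruct Ha as [a' [<- Ha]]. destruct Hb as [b' [<- Hb]].
        replace (- a' - - b') with (- (a' - b')) by ring. rewrite Rabs_Ropp.
        apply filter_In in Ha, Hb. apply Hsep; try tauto. intro; subst; apply Hab; auto.
    - intros x Hx. apply in_map_iff in Hx. destruct Hx as [x' [<- Hx']]. pose proof (Hneg x' Hx'). lra. }
  lra.
Qed.
Lemma sinlb a : 0 <= a <= 2 -> a/3 <= sin a.
Proof.
  intros Ha. assert (Hp := PI_4). assert (Hp2 := PI2_3_2).
  destruct (sin_bound a 0) as [H _]; try lra.
  eapply Rle_trans; [|exact H]. unfold sin_approx, sin_term. simpl. nra.
Qed.

Lemma abs_sin_lb t : Rabs t <= 1/2 -> Rabs t <= Rabs (sin (PI * t)).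
Proof.
  intros Ht. pose proof PI_4. pose proof PI2_3_2.
  assert (forall u, 0 <= u <= 1/2 -> u <= sin (PI * u)).
  { intros u Hu. assert (H2 := sinlb (PI * u) ltac:(split; nra)). nra. }
  destruct (Rle_dec 0 t).
  - rewrite Rabs_right in * by lra. pose proof (H1 t ltac:(lra)).
    rewrite Rabs_right; lra.
  - rewrite Rabs_left in * by lra. pose proof (H1 (-t) ltac:(lra)).
    replace (PI * t) with (- (PI * - t)) by ring. rewrite sin_neg, Rabs_Ropp.
    rewrite Rabs_right; lra.
Qed.

Definition off (f fj : R) : R :=
  let d := fj - f in
  if Rle_dec (1/2) d then d - 1 else if Rle_dec d (-1/2) then d + 1 else d.

Lemma off_range f fj : 0 <= f <= 1 -> 0 <= fj < 1 -> Rabs (off f fj) <= 1/2.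
Proof. intros. unfold off. destruct (Rle_dec _ _); [|destruct (Rle_dec _ _)]; apply Rabs_le; lra. Qed.

Lemma sin_pi_shift y : Rabs (sin (y + PI)) = Rabs (sin y) /\ Rabs (sin (y - PI)) = Rabs (sin y).
Proof. rewrite sin_plus, sin_minus, sin_PI, cos_PI. split; [replace (sin y * -1 + cos y * 0) with (- sin y) by ring
  | replace (sin y * -1 - cos y * 0) with (- sin y) by ring]; apply Rabs_Ropp. Qed.

Lemma off_sin f fj : Rabs (sin (PI * (f - fj))) = Rabs (sin (PI * off f fj)).
Proof.
  replace (PI * (f - fj)) with (- (PI * (fj - f))) by ring. rewrite sin_neg, Rabs_Ropp.
  unfold off. destruct (Rle_dec _ _); [|destruct (Rle_dec _ _)]; auto.
  - replace (PI * (fj - f - 1)) with (PI * (fj - f) - PI) by ring. symmetry; apply sin_pi_shift.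
  - replace (PI * (fj - f + 1)) with (PI * (fj - f) + PI) by ring. symmetry; apply sin_pi_shift.
Qed.

Lemma off_sep f a b : 0 <= f <= 1 -> 0 <= a < 1 -> 0 <= b < 1 ->
  wdist a b <= Rabs (off f a - off f b).
Proof.
  intros Hf Ha Hb. unfold wdist, off.
  pose proof (Rmin_l (Rabs (a - b)) (1 - Rabs (a - b))).
  pose proof (Rmin_r (Rabs (a - b)) (1 - Rabs (a - b))).
  set (r := Rmin (Rabs (a - b)) (1 - Rabs (a - b))) in *.
  destruct (Rle_dec (1/2) (a - f)); [|destruct (Rle_dec (a - f) (-1/2))];
  (destruct (Rle_dec (1/2) (b - f)); [|destruct (Rle_dec (b - f) (-1/2))]);
  unfold Rabs in *; repeat destruct Rcase_abs; lra.
Qed.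

Lemma sep_of_nth D U : 0 < D ->
  (forall i j, (i < length U)%nat -> (j < length U)%nat -> i <> j -> D <= Rabs (nth i U 0 - nth j U 0)) ->
  Sep D U.
Proof.
  intros HD H. split.
  - apply (NoDup_nth U 0). intros i j Hi Hj E. destruct (Nat.eq_dec i j); auto.
    pose proof (H i j Hi Hj n). rewrite E, Rminus_diag, Rabs_R0 in H0. lra.
  - intros a b Ha Hb Hab. apply (In_nth U a 0) in Ha. apply (In_nth U b 0) in Hb.
    destruct Ha as [i [Hi <-]]. destruct Hb as [j [Hj <-]].
    apply H; auto. intro; subst; auto.
Qed.

Lemma fold_app_c (l1 l2 : list cplx) :
  fold_right (fun z acc => cabs2 z + acc) 0 (l1 ++ l2) =
  fold_right (fun z acc => cabs2 z + acc) 0 l1 + fold_right (fun z acc => cabs2 z + acc) 0 l2.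
Proof. induction l1; simpl; [lra|]. rewrite IHl1. ring. Qed.

Lemma fold_map_c (g : R -> cplx) L :
  fold_right (fun z acc => cabs2 z + acc) 0 (map g L) = sumL (fun x => cabs2 (g x)) L.
Proof. induction L; simpl; auto. rewrite IHL; auto. Qed.

Lemma sumL_scal c g L : sumL (fun x => c * g x) L = c * sumL g L.
Proof. induction L; simpl; [ring|]. rewrite IHL; ring. Qed.

Lemma entry_bound (kap M A r : R) (j : nat) (z : cplx) :
  0 <= kap -> kap * M <= 9 -> 0 <= M -> (j <= 4)%nat -> 0 <= A -> 0 <= r <= 1 ->
  nrm z <= A * M ^ j * (r * (r * r)) ->
  cabs2 (cscale (kap ^ j) z) <= (A * 9 ^ 4) ^ 2 * r ^ 2.
Proof.
  intros Hk HkM HM Hj HA Hr Hz.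
  assert (E : cabs2 (cscale (kap ^ j) z) = (kap ^ j) ^ 2 * (fst z ^ 2 + snd z ^ 2)).
  { unfold cabs2, cscale; cbn [fst snd]. ring. }
  rewrite E.
  assert (N2 : fst z ^ 2 + snd z ^ 2 <= nrm z ^ 2).
  { unfold nrm. pose proof (Rabs_pos (fst z)). pose proof (Rabs_pos (snd z)).
    rewrite <- (pow2_abs (fst z)), <- (pow2_abs (snd z)). nra. }
  assert (Hkj : 0 <= kap ^ j) by (apply pow_le; auto).
  assert (B : kap ^ j * nrm z <= A * 9 ^ 4 * r).
  { eapply Rle_trans. apply Rmult_le_compat_l; [auto|exact Hz].
    replace (kap ^ j * (A * M ^ j * (r * (r * r)))) with (A * ((kap * M) ^ j) * (r * (r * r)))
      by (rewrite Rpow_mult_distr; ring).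
    assert (0 <= kap * M) by nra.
    assert ((kap * M) ^ j <= 9 ^ 4).
    { eapply Rle_trans. apply pow_incr; split; [auto|exact HkM]. apply Rle_pow; [lra|auto]. }
    assert (r * (r * r) <= r) by nra.
    assert (0 <= (kap * M) ^ j) by (apply pow_le; auto).
    assert (0 <= r * (r * r)) by nra.
    apply Rmult_le_compat; try nra. }
  pose proof (nrm_ge0 z).
  assert (0 <= kap ^ j * nrm z) by nra.
  replace ((kap ^ j) ^ 2 * (fst z ^ 2 + snd z ^ 2)) with ((kap ^ j) ^ 2 * (fst z ^ 2 + snd z ^ 2)) by ring.
  assert ((kap ^ j) ^ 2 * (fst z ^ 2 + snd z ^ 2) <= (kap ^ j * nrm z) ^ 2).
  { rewrite Rpow_mult_distr. apply Rmult_le_compat_l; auto. apply pow_le; auto. }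
  assert ((kap ^ j * nrm z) ^ 2 <= (A * 9 ^ 4 * r) ^ 2) by (apply pow_incr; lra).
  replace ((A * 9 ^ 4) ^ 2 * r ^ 2) with ((A * 9 ^ 4 * r) ^ 2) by ring. lra.
Qed.
Lemma mOf_facts n : (2000 <= n)%nat -> (999 <= mOf n)%nat /\ (n <= 2 * mOf n + 3)%nat.
Proof.
  intros H. unfold mOf.
  pose proof (Nat.div_mod n 2 ltac:(lia)). pose proof (Nat.mod_upper_bound n 2 ltac:(lia)).
  pose proof (Nat.div_mod (n-1) 2 ltac:(lia)). pose proof (Nat.mod_upper_bound (n-1) 2 ltac:(lia)).
  destruct (Nat.odd n); split; lia.
Qed.

Theorem lemmaG3 :
  exists Cv : R,
  forall (n m1 m2 m3 : nat) (T : list R) (Kd : nat -> R -> cplx),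
    (2000 <= n)%nat ->
    INR m1 = (247 / 1000) * INR (mOf n) ->
    INR m2 = (339 / 1000) * INR (mOf n) ->
    INR m3 = (414 / 1000) * INR (mOf n) ->
    (forall x, In x T -> 0 <= x < 1) ->
    (forall i j : nat, (i < length T)%nat -> (j < length T)%nat -> i <> j ->
       wdist (nth i T 0) (nth j T 0) >= (252 / 100) / (INR n - 1)) ->
    IsDerivSeq (Kbar m1 m2 m3) Kd ->
    forall (l : nat) (f : R), (l <= 3)%nat -> 0 <= f <= 1 ->
      cnorm2 (vbar Kd l T f) <= Cv.
Proof.
  set (A := 16 * 60 * (16 * 60 * 60)).
  exists (3 * (A * 9 ^ 4)).
  intros n m1 m2 m3 T Kd Hn H1 H2 H3 HT Hsep HK l f Hl Hf.
  destruct (mOf_facts n Hn) as [Hm1 Hm2].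
  set (m := mOf n) in *.
  apply le_INR in Hm1, Hm2. rewrite plus_INR, mult_INR in Hm2. simpl in Hm1, Hm2.
  assert (Hm : 999 <= INR m) by lra. clear Hm1.
  assert (Hn' : 2000 <= INR n) by (apply le_INR in Hn; rewrite INR_IZR_INZ in Hn; simpl in Hn; lra).
  assert (HA : 0 <= A) by (unfold A; lra).
  set (M := 2 * PI * (INR m + 1)).
  assert (HM : 0 <= M) by (unfold M; pose proof PI_RGT_0; nra).
  destruct (kappa_bound m m1 m2 m3 Kd HK Hm H1) as [Hk0 HkM].
  assert (HKd : forall j x, (j <= 4)%nat -> nrm (Kd j x) <= A * M ^ j * (rho m x * (rho m x * rho m x))).
  { intros j x Hj. rewrite (deriv_unique _ _ _ HK (KP_deriv m1 m2 m3)).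
    apply KP_bound; auto; lra. }
  set (D := 252 / 100 / (INR n - 1)).
  assert (HD : 0 < D) by (unfold D; apply Rdiv_lt_0_compat; lra).
  assert (HmD : 1 <= INR m * D).
  { unfold D. apply Rmult_le_reg_r with (INR n - 1); [lra|].
    replace (INR m * (252 / 100 / (INR n - 1)) * (INR n - 1)) with (INR m * (252/100)) by (field; lra).
    lra. }
  set (U := map (off f) T).
  assert (HU : Sep D U).
  { apply sep_of_nth; auto. intros i j Hi Hj Hij. unfold U in *. rewrite length_map in Hi, Hj.
    rewrite (nth_indep _ 0 (off f 0)) by (rewrite length_map; auto).
    rewrite (nth_indep _ 0 (off f 0)) by (rewrite length_map; auto).
    rewrite !map_nth.
    eapply Rle_trans; [|apply off_sep; auto; apply HT; apply nth_In; auto].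
    pose proof (Hsep i j Hi Hj Hij). unfold D; lra. }
  assert (HSum := sum_bound (INR m) D U ltac:(lra) HD HmD HU).
  unfold U in HSum. rewrite sumL_map in HSum.
  assert (Hrho : forall x, In x T -> rho m (f - x) ^ 2 <= / (1 + INR m * Rabs (off f x)) ^ 2).
  { intros x Hx. unfold rho. rewrite off_sin.
    pose proof (abs_sin_lb (off f x) (off_range f x Hf (HT x Hx))).
    pose proof (Rabs_pos (off f x)).
    rewrite <- Rinv_pow. 2:{ apply Rgt_not_eq. pose proof (Rabs_pos (sin (PI * off f x))). nra. }
    apply Rinv_le_contravar. apply pow_lt; nra. apply pow_incr; nra. }
  set (C1 := A * 9 ^ 4).
  assert (HE : forall j x, (j <= 4)%nat -> In x T ->
     cabs2 (cscale (kappa Kd ^ j) (Kd j (f - x))) <= C1 ^ 2 * / (1 + INR m * Rabs (off f x)) ^ 2).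
  { intros j x Hj Hx. eapply Rle_trans.
    apply (entry_bound (kappa Kd) M A (rho m (f - x))); auto.
    split; [apply Rlt_le, rho_pos|apply rho_le1].
    apply Rmult_le_compat_l. unfold C1; apply pow_le; nra. apply Hrho; auto. }
  unfold cnorm2, vbar, vbar1, vbar2.
  rewrite fold_app_c, !fold_map_c.
  assert (S1 : sumL (fun x => cabs2 (cscale (kappa Kd ^ l) (Kd l (f - x)))) T <=
               sumL (fun x => C1 ^ 2 * / (1 + INR m * Rabs (off f x)) ^ 2) T).
  { apply sumL_le. intros x Hx. apply HE; auto; lia. }
  assert (S2 : sumL (fun x => cabs2 (cscale (kappa Kd ^ l * kappa Kd) (Kd (S l) (f - x)))) T <=
               sumL (fun x => C1 ^ 2 * / (1 + INR m * Rabs (off f x)) ^ 2) T).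
  { apply sumL_le. intros x Hx. rewrite Rmult_comm, tech_pow_Rmult. apply HE; auto; lia. }
  rewrite sumL_scal in S1, S2.
  assert (HC : 0 <= C1 ^ 2) by (apply pow_le; unfold C1; nra).
  assert (X : C1 ^ 2 * sumL (fun x => / (1 + INR m * Rabs (off f x)) ^ 2) T <= C1 ^ 2 * 4)
    by (apply Rmult_le_compat_l; auto).
  assert (HC1 : 0 <= 3 * C1) by (unfold C1; nra).
  rewrite <- (sqrt_square (3 * C1)) by auto.
  apply sqrt_le_1_alt. fold C1. nra.
Qed.
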